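(* Let $L\subseteq\Sigma^*$ with $L\ne\Sigma^*$, and suppose $L$ is prefix-closed, suffix-closed, factor-closed, or subword-closed. Then: - $(L^-)^+=L^-$; - $L^+$ is closed under the same relation as $L$; - $((L^+)^-)^+=(L^+)^-$. Consequently, every language obtainable from $L$ by finitely many applications of positive closure and complement is one of $L$, $L^-$, $L^+$, $(L^+)^-$.
   Context: $L^-=\Sigma^*\setminus L$ denotes complement, and $L^+=\bigcup_{i\ge1}L^i$ denotes positive closure. A language is prefix-closed (suffix-, factor-, subword-closed) if it contains every prefix (suffix, factor, subword) of each of its words, where subword means scattered subsequence. *)

(* Defs.v *)
From Stdlib Require Import List.
Import ListNotations.

Definition lang (Sigma : Type) := list Sigma -> Prop.

Definition lang_eq {Sigma : Type} (L M : lang Sigma) : Prop :=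
  forall w, L w <-> M w.

Definition compl {Sigma : Type} (L : lang Sigma) : lang Sigma :=
  fun w => ~ L w.

Definition concat {Sigma : Type} (L M : lang Sigma) : lang Sigma :=
  fun w => exists u v, w = u ++ v /\ L u /\ M v.

Fixpoint lpow {Sigma : Type} (L : lang Sigma) (n : nat) : lang Sigma :=
  match n with
  | 0 => fun w => w = []
  | S n' => concat L (lpow L n')
  end.

Definition plus {Sigma : Type} (L : lang Sigma) : lang Sigma :=
  fun w => exists i, 1 <= i /\ lpow L i w.

Definition is_prefix {Sigma : Type} (u w : list Sigma) : Prop :=
  exists v, w = u ++ v.
Definition is_suffix {Sigma : Type} (u w : list Sigma) : Prop :=
  exists v, w = v ++ u.
Definition is_factor {Sigma : Type} (u w : list Sigma) : Prop :=
  exists x y, w = x ++ u ++ y.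
Inductive is_subword {Sigma : Type} : list Sigma -> list Sigma -> Prop :=
  | sw_nil : is_subword [] []
  | sw_skip : forall a u w, is_subword u w -> is_subword u (a :: w)
  | sw_keep : forall a u w, is_subword u w -> is_subword (a :: u) (a :: w).

Inductive closure_kind := Prefix | Suffix | Factor | Subword.

Definition krel {Sigma : Type} (k : closure_kind) : list Sigma -> list Sigma -> Prop :=
  match k with
  | Prefix => is_prefix
  | Suffix => is_suffix
  | Factor => is_factor
  | Subword => is_subword
  end.

Definition closed_under {Sigma : Type} (k : closure_kind) (L : lang Sigma) : Prop :=
  forall u w, L w -> krel k u w -> L u.

Inductive obtainable {Sigma : Type} (L : lang Sigma) : lang Sigma -> Prop :=
  | ob_base : obtainable L L
  | ob_plus : forall M, obtainable L M -> obtainable L (plus M)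
  | ob_compl : forall M, obtainable L M -> obtainable L (compl M).

(* Main.v *)
Require Import Defs.
From Stdlib Require Import List Classical.
Import ListNotations.

Lemma sw_nil_l {S : Type} (v : list S) : is_subword [] v.
Proof. induction v; constructor; auto. Qed.

Lemma sw_app_r {S : Type} (u v : list S) : is_subword u (u ++ v).
Proof. induction u; simpl. apply sw_nil_l. apply sw_keep; auto. Qed.

Lemma krel_app_l {S : Type} k (L : lang S) u v :
  closed_under k L -> L (u ++ v) -> L u \/ L v.
Proof.
  intros C H; destruct k.
  - left; apply (C u (u++v) H); exists v; reflexivity.
  - right; apply (C v (u++v) H); exists u; reflexivity.
  - left; apply (C u (u++v) H); exists [], v; reflexivity.
  - left; apply (C u (u++v) H); apply sw_app_r.
Qed.

Lemma compl_plus {S : Type} k (L : lang S) :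
  closed_under k L -> lang_eq (plus (compl L)) (compl L).
Proof.
  intros C w; split.
  - intros [i [Hi Hp]]. destruct i; [inversion Hi|]. clear Hi.
    revert w Hp; induction i; intros w Hp.
    + destruct Hp as [u [v [-> [Hu Hv]]]]; simpl in Hv; subst.
      rewrite app_nil_r; exact Hu.
    + destruct Hp as [u [v [-> [Hu Hv]]]].
      intro H; destruct (krel_app_l k L u v C H) as [H1|H1];
        [exact (Hu H1) | exact (IHi v Hv H1)].
  - intros H; exists 1; split; auto.
    exists w, []; simpl; rewrite app_nil_r; auto.
Qed.

Lemma krel_nil {S : Type} k (s : list S) : krel k s [] -> s = [].
Proof.
  destruct k; simpl.
  - intros [v H]; symmetry in H; apply app_eq_nil in H; tauto.
  - intros [v H]; symmetry in H; apply app_eq_nil in H; tauto.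
  - intros [x [y H]]; symmetry in H; apply app_eq_nil in H.
    destruct H as [_ H]; apply app_eq_nil in H; tauto.
  - intros H; inversion H; auto.
Qed.

Lemma pre_dec {S : Type} (s u v : list S) : is_prefix s (u ++ v) ->
  exists s1 s2, s = s1 ++ s2 /\ is_prefix s1 u /\ is_prefix s2 v.
Proof.
  intros [x H]. apply app_eq_app in H.
  destruct H as [l [[H1 H2]|[H1 H2]]].
  - exists s, []; rewrite app_nil_r; repeat split; [exists l; auto|exists v; auto].
  - exists u, l; repeat split; auto; [exists []; rewrite app_nil_r; auto|exists x; auto].
Qed.

Lemma suf_dec {S : Type} (s u v : list S) : is_suffix s (u ++ v) ->
  exists s1 s2, s = s1 ++ s2 /\ is_suffix s1 u /\ is_suffix s2 v.
Proof.
  intros [x H]. apply app_eq_app in H.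
  destruct H as [l [[H1 H2]|[H1 H2]]].
  - exists l, v; repeat split; auto; [exists x; auto|exists []; auto].
  - exists [], s; repeat split; [exists u; rewrite app_nil_r; auto|exists l; auto].
Qed.

Lemma sw_dec {S : Type} (u : list S) : forall s v, is_subword s (u ++ v) ->
  exists s1 s2, s = s1 ++ s2 /\ is_subword s1 u /\ is_subword s2 v.
Proof.
  induction u; simpl; intros s v H.
  - exists [], s; split; [reflexivity|split; [constructor|exact H]].
  - inversion H; subst.
    + destruct (IHu s v H2) as [s1 [s2 [-> [A B]]]].
      exists s1, s2; split; [reflexivity|split; [apply sw_skip; exact A|exact B]].
    + destruct (IHu u0 v H2) as [s1 [s2 [-> [A B]]]].
      exists (a :: s1), s2; split; [reflexivity|split; [apply sw_keep; exact A|exact B]].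
Qed.

Lemma krel_dec {S : Type} k (s u v : list S) : krel k s (u ++ v) ->
  exists s1 s2, s = s1 ++ s2 /\ krel k s1 u /\ krel k s2 v.
Proof.
  destruct k; simpl.
  - apply pre_dec.
  - apply suf_dec.
  - intros [x [y H]].
    assert (Hs : is_suffix (s ++ y) (u ++ v)) by (exists x; auto).
    destruct (suf_dec _ _ _ Hs) as [t1 [t2 [E [[a Ha] [b Hb]]]]].
    assert (Hp : is_prefix s (t1 ++ t2)) by (exists y; auto).
    destruct (pre_dec _ _ _ Hp) as [s1 [s2 [-> [[c Hc] [d Hd]]]]].
    exists s1, s2; repeat split.
    + exists a, c; subst; auto.
    + exists b, d; subst; auto.
  - apply sw_dec.
Qed.

Lemma lpow_closed {S : Type} k (L : lang S) :
  closed_under k L -> forall n, closed_under k (lpow L n).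
Proof.
  intros C n; induction n; intros s w Hw Hr; simpl in *.
  - subst; apply (krel_nil k s Hr).
  - destruct Hw as [u [v [-> [Hu Hv]]]].
    destruct (krel_dec k s u v Hr) as [s1 [s2 [-> [A B]]]].
    exists s1, s2; repeat split; eauto.
Qed.

Lemma plus_closed {S : Type} k (L : lang S) :
  closed_under k L -> closed_under k (plus L).
Proof.
  intros C s w [i [Hi Hw]] Hr; exists i; split; auto.
  exact (lpow_closed k L C i s w Hw Hr).
Qed.

Lemma lpow_app {S : Type} (L : lang S) i : forall j u v,
  lpow L i u -> lpow L j v -> lpow L (i + j) (u ++ v).
Proof.
  induction i; simpl; intros j u v Hu Hv.
  - subst; auto.
  - destruct Hu as [a [b [-> [Ha Hb]]]].
    exists a, (b ++ v); rewrite app_assoc; auto.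
Qed.

Lemma plus_plus {S : Type} (L : lang S) : lang_eq (plus (plus L)) (plus L).
Proof.
  intros w; split.
  - intros [i [Hi Hw]]. destruct i; [inversion Hi|]. clear Hi.
    revert w Hw; induction i; intros w Hw.
    + destruct Hw as [u [v [-> [Hu Hv]]]]; simpl in Hv; subst.
      rewrite app_nil_r; exact Hu.
    + destruct Hw as [u [v [-> [[a [Ha Hu]] Hv]]]].
      destruct (IHi v Hv) as [b [Hb Hv']].
      exists (a + b); split; [destruct a; [inversion Ha|]; simpl; apply le_n_S, le_0_n|].
      apply lpow_app; auto.
  - intros H; exists 1; split; auto.
    exists w, []; simpl; rewrite app_nil_r; auto.
Qed.

Lemma lpow_eq {S : Type} (M X : lang S) : lang_eq M X ->
  forall n w, lpow M n w -> lpow X n w.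
Proof.
  intros E n; induction n; simpl; intros w H; auto.
  destruct H as [u [v [-> [Hu Hv]]]]; exists u, v; repeat split; auto.
  apply E; auto.
Qed.

Lemma plus_eq {S : Type} (M X : lang S) : lang_eq M X -> lang_eq (plus M) (plus X).
Proof.
  intros E w; split; intros [i [Hi H]]; exists i; split; auto.
  - apply (lpow_eq M X E); auto.
  - apply (lpow_eq X M (fun w => iff_sym (E w))); auto.
Qed.

Lemma compl_eq {S : Type} (M X : lang S) : lang_eq M X -> lang_eq (compl M) (compl X).
Proof. intros E w; unfold compl; rewrite (E w); tauto. Qed.

Lemma compl_compl {S : Type} (M : lang S) : lang_eq (compl (compl M)) M.
Proof. intros w; unfold compl; split; [apply NNPP|tauto]. Qed.

Lemma eq_trans' {S : Type} (A B C : lang S) : lang_eq A B -> lang_eq B C -> lang_eq A C.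
Proof. intros H1 H2 w; rewrite (H1 w); apply H2. Qed.

Theorem mainTheorem9 (Sigma : Type) (L : lang Sigma) (k : closure_kind) :
  (exists w, ~ L w) ->
  closed_under k L ->
  lang_eq (plus (compl L)) (compl L) /\
  closed_under k (plus L) /\
  lang_eq (plus (compl (plus L))) (compl (plus L)) /\
  (forall M, obtainable L M ->
     lang_eq M L \/ lang_eq M (compl L) \/ lang_eq M (plus L) \/
     lang_eq M (compl (plus L))).
Proof.
  intros _ C.
  pose proof (compl_plus k L C) as H1.
  pose proof (plus_closed k L C) as H2.
  pose proof (compl_plus k (plus L) H2) as H3.
  split; [exact H1|split; [exact H2|split; [exact H3|]]].
  intros M HM; induction HM.
  - left; intros w; tauto.
  - destruct IHHM as [E|[E|[E|E]]]; apply plus_eq in E.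
    + right; right; left; exact E.
    + right; left; exact (eq_trans' _ _ _ E H1).
    + right; right; left; exact (eq_trans' _ _ _ E (plus_plus L)).
    + right; right; right; exact (eq_trans' _ _ _ E H3).
  - destruct IHHM as [E|[E|[E|E]]]; apply compl_eq in E.
    + right; left; exact E.
    + left; exact (eq_trans' _ _ _ E (compl_compl L)).
    + right; right; right; exact E.
    + right; right; left; exact (eq_trans' _ _ _ E (compl_compl _)).
Qed.
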